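(* Let $\mu=(p,q,r,s)\in\mathbb{R}^4$ with $(p,q,r)\neq(0,0,0)$. For all $\varepsilon>0$ and $K>0$ there exists a real triple $(x_1,x_2,x_3)\in\mathbb{R}^3$ with $x_1^2+x_2^2+x_3^2+x_1x_2x_3=px_1+qx_2+rx_3+s$ such that, for some labelling $\{i,j,k\}=\{1,2,3\}$, one has $-(2+\varepsilon)<x_i<-2$, $x_jx_k>0$, $|x_j|>K$ and $|x_k|>K$. *)

(* Defs.v *)
From Stdlib Require Import Reals.
Open Scope R_scope.

Definition on_surface (p q r s x1 x2 x3 : R) : Prop :=
  x1^2 + x2^2 + x3^2 + x1*x2*x3 = p*x1 + q*x2 + r*x3 + s.

Definition good_label (eps K xi xj xk : R) : Prop :=
  -(2+eps) < xi < -2 /\ xj * xk > 0 /\ Rabs xj > K /\ Rabs xk > K.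

(* Main.v *)
Require Import Defs.
From Stdlib Require Import Reals Lra Psatz.
Open Scope R_scope.

Theorem lemma5p1 (p q r s : R) (hpqr : ~ (p = 0 /\ q = 0 /\ r = 0)) :
  forall eps K : R, eps > 0 -> K > 0 ->
  exists x1 x2 x3 : R,
    on_surface p q r s x1 x2 x3 /\
    (good_label eps K x1 x2 x3 \/ good_label eps K x2 x1 x3 \/
     good_label eps K x3 x1 x2).
Proof.
  intros eps K he hK.
  set (a := -2 - eps/2).
  set (A := a*a - 4).
  set (c := a*a - p*a - s).
  set (B := 4*q - 2*a*r).
  set (C := r*r - 4*c).
  assert (hA : A > 0) by (unfold A, a; nra).
  set (X := 1 + K + Rabs r + (Rabs B + Rabs C)/A).
  assert (hB := Rabs_pos B). assert (hC := Rabs_pos C).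
  assert (hq : (Rabs B + Rabs C)/A >= 0).
  { apply Rle_ge. unfold Rdiv. apply Rmult_le_pos; [lra|]. left; apply Rinv_0_lt_compat; lra. }
  assert (hr := Rabs_pos r).
  assert (hX1 : X >= 1) by (unfold X; lra).
  set (D := A*X*X + B*X + C).
  assert (hAX : A*X >= Rabs B + Rabs C).
  { unfold X. rewrite Rmult_plus_distr_l.
    replace (A * ((Rabs B + Rabs C) / A)) with (Rabs B + Rabs C) by (field; lra).
    assert (A * (1 + K + Rabs r) >= 0) by nra. lra. }
  assert (hD : 0 <= D).
  { unfold D. assert (h1 := Rle_abs B). assert (h2 := Rle_abs (-B)).
    rewrite Rabs_Ropp in h2. assert (h3 := Rle_abs (-C)). rewrite Rabs_Ropp in h3.
    assert (A*X*X >= (Rabs B + Rabs C)*X) by nra. nra. }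
  set (S := sqrt D).
  assert (hS : S*S = D) by (apply sqrt_sqrt; exact hD).
  assert (hS0 : 0 <= S) by apply sqrt_pos.
  set (x3 := (r - a*X + S)/2).
  exists a, X, x3. split.
  - unfold on_surface. unfold D, A, B, C, c in hS. unfold x3. nra.
  - left. unfold good_label.
    assert (hx3 : x3 > K).
    { unfold x3. assert (h := Rle_abs (-r)). rewrite Rabs_Ropp in h.
      assert (X > K + Rabs r) by (unfold X; lra).
      unfold a; nra. }
    split; [unfold a; lra|]. split; [nra|].
    rewrite !Rabs_right; try lra. split; unfold X; lra.
Qed.
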